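(* Let $A$ be a real symmetric $n\times n$ matrix and suppose there exist $\alpha\in\mathbb{R}$ with $A+\alpha I\neq 0$ and an integer $k$ with $1\le k<n/2$ such that $$\mathbb{1}^\top A\mathbb{1}\ge\sqrt{(n-k)^2+k^2}\,\|A+\alpha I\|_F-n\alpha.$$ Then the largest (rightmost) eigenvalue of $A$ is simple, and a corresponding eigenvector can be chosen (up to sign) so that it has at least $n-k+1$ nonnegative entries.
   Context: $\mathbb{1}\in\mathbb{R}^n$ is the all-ones vector, $I$ the identity matrix, and $\|\cdot\|_F$ the Frobenius norm. *)

(* Defs.v *)
(* Real numbers are modelled by an arbitrary real closed field R. *)
From HB Require Import structures.
From mathcomp Require Export all_boot all_order all_algebra.
Set Implicit Arguments. Unset Strict Implicit. Unset Printing Implicit Defensive.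
Import Order.TTheory GRing.Theory Num.Theory.
Local Open Scope ring_scope.

Definition frob_norm (R : rcfType) (n : nat) (M : 'M[R]_n) : R :=
  Num.sqrt (\sum_(i < n) \sum_(j < n) M i j ^+ 2).

Definition ones_quad (R : rcfType) (n : nat) (M : 'M[R]_n) : R :=
  \sum_(i < n) \sum_(j < n) M i j.

Definition simple_eigenvalue (R : rcfType) (n : nat) (M : 'M[R]_n) (a : R) : Prop :=
  mup a (char_poly M) = 1%N.

(* Main.v *)
Require Import Defs.
From mathcomp Require Import all_real_closed.
From mathcomp Require Import sesquilinear spectral.
From mathcomp Require Import ring lra zify.
Import Order.TTheory GRing.Theory Num.Theory.
Local Open Scope ring_scope.
Local Open Scope sesquilinear_scope.

Lemma form_diag {C : numClosedFieldType} n (y z e : 'rV[C]_n) :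
  (y *m diag_mx e *m z^t*) 0 0 = \sum_j y 0 j * e 0 j * (z 0 j)^*.
Proof. by rewrite mul_mx_diag !mxE; apply: eq_bigr => j _; rewrite !mxE. Qed.

Lemma form_id {C : numClosedFieldType} n (y z : 'rV[C]_n) :
  (y *m z^t*) 0 0 = \sum_j y 0 j * (z 0 j)^*.
Proof. by rewrite !mxE; apply: eq_bigr => j _; rewrite !mxE. Qed.

Lemma trC_mul {C : numClosedFieldType} m n p (X : 'M[C]_(m, n)) (Y : 'M[C]_(n, p)) :
  (X *m Y)^t* = Y^t* *m X^t*.
Proof. by rewrite trmx_mul map_mxM. Qed.

Lemma unit_move {C : numClosedFieldType} n (P : 'M[C]_n) (x z : 'rV[C]_n) (M : 'M[C]_n) :
  P \is unitarymx ->
  x *m (P^t* *m M *m P) *m z^t* = (x *m P^t*) *m M *m (z *m P^t*)^t*.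
Proof.
move=> Pu; rewrite trC_mul trmxCK !mulmxA; done.
Qed.

Lemma ones_form {C : numClosedFieldType} n (M : 'M[C]_n) :
  ((const_mx 1 : 'rV[C]_n) *m M *m (const_mx 1 : 'rV[C]_n)^t*) 0 0 = \sum_i \sum_j M i j.
Proof.
rewrite form_id exchange_big /=; apply: eq_bigr => j _.
rewrite !mxE conjC1 mulr1; apply: eq_bigr => i _; by rewrite mxE mul1r.
Qed.

Lemma unit_dot {C : numClosedFieldType} n (P : 'M[C]_n) (a b : 'rV[C]_n) :
  P^t* *m P = 1%:M -> a *m b^t* = (a *m P^t*) *m (b *m P^t*)^t*.
Proof. by move=> PtP; rewrite trC_mul trmxCK mulmxA -(mulmxA a) PtP mulmx1. Qed.

Lemma unit_PtP {C : numClosedFieldType} n (P : 'M[C]_n) :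
  P \is unitarymx -> P^t* *m P = 1%:M.
Proof. by move=> Pu; rewrite -invmx_unitary // mulVmx // unitarymx_unit. Qed.
Notation toC R := (real_complex R).

Lemma conj_toC {R : rcfType} (x : R) : (toC R x)^* = toC R x.
have : toC R x \is Num.real by rewrite complex_real.
by move/CrealP.
Qed.

Lemma real_spectral {R : rcfType} n (A : 'M[R]_n) : A^T = A ->
  exists (P : 'M[R[i]]_n) (r : 'I_n -> R), P \is unitarymx /\
    map_mx (toC R) A = P^t* *m diag_mx (\row_j toC R (r j)) *m P.
Proof.
move=> As.
set AC := map_mx (toC R) A.
have Aher : AC \is hermsymmx.
  apply: realsym_hermsym.
    by apply/is_hermitianmxP; rewrite expr0 scale1r map_mx_id // /AC map_trmx As.
  by apply/mxOverP => i j; rewrite mxE complex_real.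
have Anorm := hermitian_normalmx Aher.
have Hd := hermitian_spectral_diag_real Aher.
exists (spectralmx AC), (fun j => complex.Re (spectral_diag AC 0 j)).
split; first exact: spectral_unitarymx.
have -> : \row_j toC R (complex.Re (spectral_diag AC 0 j)) = spectral_diag AC.
  apply/rowP => j; rewrite mxE RRe_real //.
  by move/mxOverP: Hd; apply.
rewrite -invmx_unitary ?spectral_unitarymx //.
exact/orthomx_spectralP.
Qed.
Lemma char_poly_conj {F : fieldType} n (P M : 'M[F]_n) : P \in unitmx ->
  char_poly (invmx P *m M *m P) = char_poly M.
Proof.
move=> Pu.
pose f := map_mx (@polyC F) : 'M[F]_n -> 'M[{poly F}]_n.
have E : char_poly_mx (invmx P *m M *m P) = f (invmx P) *m char_poly_mx M *m f P.
  rewrite /char_poly_mx /f !map_mxM mulmxBr mulmxBl -!mulmxA.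
  congr (_ - _); rewrite -scalar_mxC mulmxA -map_mxM mulVmx // map_mx1 mul1mx.
  reflexivity.
rewrite /char_poly E !det_mulmx mulrC mulrA -det_mulmx /f -map_mxM mulmxV //.
by rewrite map_mx1 det1 mul1r.
Qed.

Lemma spectral_data (R : rcfType) n (A : 'M[R]_n) (alpha : R) : A^T = A ->
 exists (r : 'I_n -> R) (w : 'I_n -> R),
  [/\ map_poly (toC R) (char_poly A) = \prod_(j < n) ('X - (toC R (r j))%:P),
      (forall j, 0 <= w j) /\ \sum_j w j = n%:R,
      ones_quad (A + alpha%:M) = \sum_j (r j + alpha) * w j,
      \sum_(i < n) \sum_(j < n) (A + alpha%:M) i j ^+ 2 = \sum_j (r j + alpha)^+2 &
      forall (j1 : 'I_n), (forall j, j != j1 -> r j != r j1) ->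
      forall v : 'rV[R]_n, v *m A = r j1 *: v ->
         (\sum_i v 0 i)^+2 = w j1 * \sum_i v 0 i ^+2 ].
Proof.
move=> As.
have [P [r [Pu AE]]] := @real_spectral R n A As.
set D := diag_mx (\row_j toC R (r j)) in AE.
have PtP := @unit_PtP _ _ P Pu.
have Punit : P \in unitmx by exact: unitarymx_unit.
set u := const_mx 1 : 'rV[R[i]]_n.
set y := u *m P^t*.
have yreal : forall j, y 0 j * (y 0 j)^* \is Num.real.
  by move=> j; apply: ger0_real; apply: mul_conjC_ge0.
pose w j := complex.Re (y 0 j * (y 0 j)^*).
have wE : forall j, toC R (w j) = y 0 j * (y 0 j)^*.
  by move=> j; rewrite /w RRe_real.
set e := \row_j toC R (r j + alpha).
have BCE : map_mx (toC R) (A + alpha%:M) = P^t* *m diag_mx e *m P.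
  have -> : diag_mx e = D + (toC R alpha)%:M.
    apply/matrixP => i j; rewrite /D /e !mxE.
    by case: eqP => _; rewrite ?mulr1n ?mulr0n ?addr0 ?rmorphD.
  rewrite map_mxD AE map_scalar_mx mulmxDr mulmxDl scalar_mxC.
  by rewrite -[_%:M *m _ *m _]mulmxA PtP mulmx1.
exists r, w; split.
- rewrite map_char_poly AE -invmx_unitary // char_poly_conj //.
  rewrite char_poly_trig ?diag_mx_is_trig //.
  by apply: eq_bigr => j _; rewrite /D !mxE eqxx mulr1n.
- split.
  + by move=> j; rewrite -ler0c wE mul_conjC_ge0.
  + apply: (@complexI R); rewrite rmorph_sum.
    rewrite (eq_bigr (fun j => y 0 j * (y 0 j)^*)); last by move=> j _; exact: wE.
    rewrite -form_id /y trC_mul trmxCK mulmxA -(mulmxA u) PtP mulmx1 form_id.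
    rewrite rmorph_nat.
    under eq_bigr => j _ do rewrite /u mxE conjC1 mulr1.
    by rewrite sumr_const card_ord.
- apply: (@complexI R); rewrite /ones_quad rmorph_sum.
  rewrite (eq_bigr (fun i => \sum_j map_mx (toC R) (A + alpha%:M) i j)); last first.
    by move=> i _; rewrite rmorph_sum; apply: eq_bigr => j _; rewrite [RHS]mxE.
  rewrite -ones_form BCE unit_move // form_diag rmorph_sum.
  apply: eq_bigr => j _; rewrite mulrAC -wE [e 0 j]mxE rmorphM mulrC; reflexivity.
- have Bs : (A + alpha%:M)^T = A + alpha%:M by rewrite linearD /= tr_scalar_mx As.
  apply: (@complexI R); rewrite rmorph_sum.
  set BC := map_mx (toC R) (A + alpha%:M) in BCE *.
  have BCs : forall i j, BC i j = BC j i.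
    have Bs' : forall i j, (A + alpha%:M) i j = (A + alpha%:M) j i.
      by move=> i j; rewrite -{1}Bs [LHS]mxE.
    by move=> i j; rewrite /BC [LHS]mxE [RHS]mxE Bs'.
  rewrite (eq_bigr (fun i => (BC *m BC) i i)); last first.
    move=> i _; rewrite rmorph_sum mxE; apply: eq_bigr => j _.
    have e1 : BC i j = toC R ((A + alpha%:M) i j) by rewrite /BC mxE.
    rewrite [BC j i]BCs e1 rmorphXn expr2; reflexivity.
  rewrite -/(mxtrace _) BCE -!mulmxA mxtrace_mulC -!mulmxA.
  rewrite (unitarymxP Pu) mulmx1 mxtrace_mulC !mulmxA (unitarymxP Pu) mul1mx.
  rewrite mul_mx_diag /mxtrace rmorph_sum.
  by apply: eq_bigr => j _; rewrite !mxE eqxx mulr1n rmorphXn expr2.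
- move=> j1 rdist v vE.
  set vC := map_mx (toC R) v.
  have vCE : vC *m map_mx (toC R) A = toC R (r j1) *: vC.
    by rewrite /vC -map_mxM vE map_mxZ.
  have [z zE] : {z | z = vC *m P^t*} by exists (vC *m P^t*).
  have APt : map_mx (toC R) A *m P^t* = P^t* *m D.
    by rewrite AE -!mulmxA (unitarymxP Pu) mulmx1.
  have zD : z *m D = toC R (r j1) *: z.
    by rewrite zE -mulmxA -APt mulmxA vCE -scalemxAl.
  have z0 : forall j, j != j1 -> z 0 j = 0.
    move=> j jn; move/rowP/(_ j): zD; rewrite /D mul_mx_diag !mxE => h.
    have : z 0 j * (toC R (r j) - toC R (r j1)) = 0 by rewrite mulrBr h mulrC subrr.
    move/eqP; rewrite mulf_eq0 subr_eq0 => /orP[/eqP //|].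
    by move/eqP/complexI/eqP; rewrite (negPf (rdist j jn)).
  have S1 : toC R (\sum_i v 0 i) = z 0 j1 * (y 0 j1)^*.
    transitivity ((vC *m u^t*) 0 0).
      rewrite form_id rmorph_sum; apply: eq_bigr => i _.
      by rewrite /vC /u !mxE conjC1 mulr1.
    rewrite (unit_dot _ _ _ _ PtP) -zE -/y form_id (bigD1 j1) //= big1 ?addr0 //.
    by move=> j jn; rewrite z0 // mul0r.
  have S2 : toC R (\sum_i v 0 i ^+ 2) = z 0 j1 * (z 0 j1)^*.
    transitivity ((vC *m vC^t*) 0 0).
      rewrite form_id rmorph_sum; apply: eq_bigr => i _.
      by rewrite /vC !mxE conj_toC rmorphXn expr2.
    rewrite (unit_dot _ _ _ _ PtP) -zE form_id (bigD1 j1) //= big1 ?addr0 //.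
    by move=> j jn; rewrite z0 // mul0r.
  have S1r : (z 0 j1 * (y 0 j1)^*)^* = z 0 j1 * (y 0 j1)^* by rewrite -S1 conj_toC.
  apply: (@complexI R); rewrite rmorphXn rmorphM /= S1 S2 wE.
  rewrite expr2 -{2}S1r rmorphM /= conjCK; ring.
Qed.
Lemma key_ineq (R : rcfType) (N K a b t c F : R) :
  1 <= K -> 2 * K + 1 <= N -> b <= a -> a^+2 + b^+2 <= F^+2 -> 0 < F ->
  0 <= t -> t <= N -> 0 <= c -> c^+2 = (N - K)^+2 + K^+2 ->
  c * F <= a * t + b * (N - t) -> b < a /\ N - K <= t.
Proof.
move=> K1 NK ba abF F0 t0 tN c0 cE H.
have cF0 : 0 <= c * F by rewrite mulr_ge0 // ltW.
have cbig : N^+2 < 2 * c^+2 by rewrite cE; nra.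
have sq : (c * F)^+2 <= (a * t + b * (N - t))^+2.
  rewrite ler_sqr ?nnegrE //; lra.
split.
  rewrite lt_neqAle ba andbT; apply/negP => /eqP ebaE; subst b.
  have : (c * F)^+2 <= a^+2 * N^+2 by move: sq; congr (_ <= _); ring.
  have : 2 * a^+2 <= F^+2 by lra.
  move=> h1 h2.
  have : c^+2 * F^+2 <= F^+2 * N^+2 / 2.
    move: h2; rewrite exprMn => h2; apply: (le_trans h2).
    rewrite ler_pdivlMr //; nra.
  move=> h3.
  have F2 : 0 < F^+2 by rewrite exprn_gt0.
  nra.
rewrite leNgt; apply/negP => tlt.
have F2 : 0 < F^+2 by rewrite exprn_gt0.
have cs : (a * t + b * (N - t))^+2 <= (a^+2 + b^+2) * (t^+2 + (N - t)^+2).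
  have : 0 <= (a * (N - t) - b * t)^+2 by apply: sqr_ge0.
  nra.
have h4 : c^+2 * F^+2 <= F^+2 * (t^+2 + (N - t)^+2).
  rewrite -exprMn; apply: (le_trans sq); apply: (le_trans cs).
  apply: ler_wpM2r; [nra|lra].
have h5 : c^+2 <= t^+2 + (N - t)^+2.
  by rewrite -(ler_pM2l F2) mulrC.
have tK : t <= K by rewrite cE in h5; nra.
have Ht : 0 < a * t + b * (N - t).
  apply: (lt_le_trans _ H).
  have c2 : 0 < c^+2 by rewrite cE; nra.
  have cp : 0 < c by rewrite lt_neqAle c0 andbT eq_sym; apply: contraTneq c2 => ->; rewrite expr0n ltxx.
  exact: mulr_gt0.
case: (lerP 0 b) => b0.
  have h6 : 2 * (a * t + b * (N - t)) <= (a + b) * N by nra.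
  have h7 : (a + b)^+2 <= 2 * F^+2 by nra.
  have h8 : (2 * (c * F))^+2 <= ((a + b) * N)^+2.
    rewrite ler_sqr ?nnegrE; nra.
  have h9 : c^+2 * F^+2 * 4 <= (a + b)^+2 * N^+2.
    move: h8; rewrite !exprMn; nra.
  nra.
have a0 : 0 < a by nra.
have aF : a <= F by nra.
have h6 : c * F <= F * K.
  apply: (le_trans H); nra.
have cK : c <= K by rewrite mulrC ler_pM2l // in h6.
have : c^+2 <= K^+2 by rewrite ler_sqr ?nnegrE; lra.
rewrite cE; nra.
Qed.
Lemma cs_set (R : rcfType) n (S : {set 'I_n}) (x : 'I_n -> R) :
  (\sum_(i in S) x i)^+2 <= #|S|%:R * \sum_(i in S) x i ^+ 2.
Proof.
have H : 0 <= \sum_(i in S) \sum_(j in S) (x i - x j)^+2.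
  by apply: sumr_ge0 => i _; apply: sumr_ge0 => j _; apply: sqr_ge0.
have E : \sum_(i in S) \sum_(j in S) (x i - x j)^+2 =
   2 * (#|S|%:R * \sum_(i in S) x i ^+ 2 - (\sum_(i in S) x i)^+2).
  have E1 : forall i, \sum_(j in S) (x i - x j)^+2 =
     #|S|%:R * x i ^+ 2 - 2 * x i * \sum_(j in S) x j + \sum_(j in S) x j ^+2.
    move=> i.
    under eq_bigr => j _ do rewrite sqrrB.
    rewrite big_split /= big_split /= sumrN sumr_const.
    by rewrite sumrMnl -mulr_sumr -[x i ^+2 *+ _]mulr_natr mulr2n; ring.
  under eq_bigr => i _ do rewrite E1.
  rewrite big_split /= big_split /= sumrN sumr_const -mulr_sumr -mulr_suml -mulr_sumr.
  rewrite -mulr_natr; ring.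
lra.
Qed.

Lemma count_nonneg (R : rcfType) n k (v : 'I_n -> R) : (1 <= k)%N -> (k < n)%N ->
  0 <= \sum_i v i -> (n - k)%N%:R * \sum_i v i ^+ 2 <= (\sum_i v i)^+2 ->
  ((n - k).+1 <= #|[set i | (0 <= v i)%R]|)%N.
Proof.
move=> k1 kn s0 H; rewrite ltnNge; apply/negP => Hm.
set S := [set i | (0 <= v i)%R] in Hm.
have [j jS] : exists j, j \notin S.
  apply/existsP; rewrite -negb_forall; apply/negP => /forallP allS.
  have : #|S| = n by rewrite -[RHS]card_ord; apply: eq_card => i; rewrite allS.
  move=> cS; move: Hm; rewrite cS; lia.
have vj : v j < 0 by move: jS; rewrite inE ltNge.
have split1 : \sum_i v i = \sum_(i in S) v i + \sum_(i | i \notin S) v i.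
  by rewrite (bigID (mem S)).
have split2 : \sum_i v i ^+2 = \sum_(i in S) v i ^+2 + \sum_(i | i \notin S) v i ^+2.
  by rewrite (bigID (mem S)).
have neg : \sum_(i | i \notin S) v i <= 0.
  by apply: sumr_le0 => i; rewrite inE -ltNge => /ltW.
have pos2 : v j ^+ 2 <= \sum_(i | i \notin S) v i ^+2.
  rewrite (bigD1 j) //= lerDl; apply: sumr_ge0 => i _; apply: sqr_ge0.
have vj2 : 0 < v j ^+2 by rewrite exprn_even_gt0 //= ltr0_neq0.
have spos : 0 <= \sum_(i in S) v i by apply: sumr_ge0 => i; rewrite inE.
have S2pos : 0 <= \sum_(i in S) v i ^+2 by apply: sumr_ge0 => i _; apply: sqr_ge0.
have cs := @cs_set R n S v.
have mle : #|S|%:R <= (n - k)%:R :> R by rewrite ler_nat.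
have nk : 0 < (n - k)%:R :> R by rewrite ltr0n subn_gt0.
have h1 : (\sum_i v i)^+2 <= (\sum_(i in S) v i)^+2.
  rewrite ler_sqr ?nnegrE //; lra.
have h2 : #|S|%:R * \sum_(i in S) v i ^+ 2 <= (n - k)%:R * \sum_(i in S) v i ^+ 2.
  by apply: ler_wpM2r.
move: H; rewrite split2; nra.
Qed.

Lemma exists_max (R : realDomainType) (I : finType) (P : pred I) (F : I -> R) i0 :
  P i0 -> exists2 j, P j & forall i, P i -> F i <= F j.
Proof.
move=> Pi0; case: (Order.TotalTheory.arg_maxP F Pi0) => j Pj H.
by exists j.
Qed.

Lemma mup_map (F : fieldType) (K : fieldType) (f : {rmorphism F -> K}) (p : {poly F}) x :
  p != 0 -> mup (f x) (map_poly f p) = mup x p.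
Proof.
move=> p0; have fp0 : map_poly f p != 0 by rewrite map_poly_eq0.
apply/eqP; rewrite eqn_leq mup_leq // mup_geq //.
rewrite -(map_polyXsubC f) -rmorphXn dvdp_map -mup_leq // leqnn /=.
by rewrite -rmorphXn dvdp_map -mup_geq.
Qed.

Lemma ones_quad_shift (R : rcfType) n (A : 'M[R]_n) alpha :
  ones_quad (A + alpha%:M) = ones_quad A + n%:R * alpha.
Proof.
have -> : n%:R * alpha = \sum_(i < n) alpha by rewrite sumr_const card_ord mulr_natl.
rewrite /ones_quad -big_split /=; apply: eq_bigr => i _.
rewrite (eq_bigr (fun j => A i j + (alpha%:M : 'M[R]_n) i j)); last by move=> j _; rewrite mxE.
rewrite big_split /=; congr (_ + _).
rewrite (bigD1 i) //= mxE eqxx mulr1n big1 ?addr0 // => j ji.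
by rewrite mxE eq_sym (negPf ji) mulr0n.
Qed.

Theorem corollary7 (R : rcfType) (n : nat) (A : 'M[R]_n) (alpha : R) (k : nat) :
  A^T = A ->
  A + alpha%:M != 0 ->
  (1 <= k)%N -> (k.*2 < n)%N ->
  ones_quad A >=
    Num.sqrt (((n - k)%:R) ^+ 2 + (k%:R) ^+ 2) * frob_norm (A + alpha%:M)
    - n%:R * alpha ->
  exists lambda : R,
    [/\ eigenvalue A lambda,
        (forall mu : R, eigenvalue A mu -> mu <= lambda),
        simple_eigenvalue A lambda &
        exists v : 'cV[R]_n,
          [/\ v != 0, A *m v = lambda *: v &
              ((n - k).+1 <= #|[set i : 'I_n | (0 <= v i ord0)%R]|)%N]].
Proof.
move=> As Bnz k1 kn Hq.
have [r [w [cpE [w0 wsum] oq fro ev]]] := @spectral_data R n A alpha As.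
have n2 : (2 < n)%N by move: kn k1; rewrite -addnn; lia.
have n0 : (0 < n)%N by lia.
have n1 : (1 < n)%N by lia.
pose i0 := Ordinal n0.
have [j1 _ j1max] := @exists_max R 'I_n predT r i0 isT.
have [i1 i1j] : exists i1 : 'I_n, i1 != j1.
  case: (eqVneq j1 i0) => h.
    by exists (Ordinal n1); rewrite h; apply/eqP => /(congr1 val).
  by exists i0; rewrite eq_sym.
have [j2 j2n j2max] := @exists_max R 'I_n (predC1 j1) r i1 i1j.
set B := A + alpha%:M in Bnz Hq oq fro *.
set G := \sum_(i < n) \sum_(j < n) B i j ^+ 2 in fro.
have G0 : 0 <= G by apply: sumr_ge0 => i _; apply: sumr_ge0 => j _; apply: sqr_ge0.
have Gpos : 0 < G.
  have : [exists i, exists j, B i j != 0].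
    apply: contraR Bnz => /existsPn H; apply/eqP/matrixP => i j; rewrite [RHS]mxE.
    by move/existsPn: (H i) => /(_ j); rewrite negbK => /eqP.
  move=> /existsP [i /existsP [j Bij]].
  rewrite /G (bigD1 i) //= (bigD1 j) //=.
  have : 0 < B i j ^+ 2 by rewrite exprn_even_gt0.
  have : 0 <= \sum_(j0 < n | j0 != j) B i j0 ^+ 2 by apply: sumr_ge0 => ? _; apply: sqr_ge0.
  have : 0 <= \sum_(i0 < n | i0 != i) \sum_(j < n) B i0 j ^+ 2.
    by apply: sumr_ge0 => ? _; apply: sumr_ge0 => ? _; apply: sqr_ge0.
  lra.
set F := frob_norm B.
have hF2 : F ^+ 2 = \sum_j (r j + alpha) ^+ 2 by rewrite /F /frob_norm -/G sqr_sqrtr.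
have Fpos : 0 < F by rewrite /F /frob_norm -/G sqrtr_gt0.
set N := n%:R : R.
set K := k%:R : R.
set a := r j1 + alpha.
set b := r j2 + alpha.
set t := w j1.
have hab : b <= a by rewrite /a /b lerD2r; exact: j1max.
have habF : a ^+ 2 + b ^+ 2 <= F ^+ 2.
  rewrite hF2 (bigD1 j1) //= (bigD1 j2) //= addrA lerDl.
  by apply: sumr_ge0 => ? _; apply: sqr_ge0.
have t0 : 0 <= t by apply: w0.
have tsplit : \sum_j w j = t + \sum_(j | j != j1) w j by rewrite (bigD1 j1).
have rest0 : 0 <= \sum_(j | j != j1) w j by apply: sumr_ge0 => ? _.
have tN : t <= N by rewrite /N -wsum tsplit lerDl.
have [c cdef] : {c : R | c = Num.sqrt ((n - k)%:R ^+ 2 + k%:R ^+ 2)} by eexists.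
rewrite -cdef in Hq.
have c0 : 0 <= c by rewrite cdef sqrtr_ge0.
have kle : (k <= n)%N by rewrite (leq_trans _ (ltnW kn)) // -addnn leq_addr.
have cE : c ^+ 2 = (N - K) ^+ 2 + K ^+ 2.
  by rewrite cdef sqr_sqrtr ?natrB // addr_ge0 // sqr_ge0.
have Hsum : \sum_j (r j + alpha) * w j <= a * t + b * (N - t).
  rewrite (bigD1 j1) //= lerD2l.
  have -> : N - t = \sum_(j | j != j1) w j by rewrite /N -wsum tsplit addrC addKr.
  rewrite mulr_sumr; apply: ler_sum => j jn; apply: ler_wpM2r => //.
  by rewrite /b lerD2r; apply: j2max.
have HcF : c * F <= a * t + b * (N - t).
  apply: le_trans Hsum; rewrite -oq ones_quad_shift; move: Hq; rewrite -/F -/N; lra.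
have K1 : 1 <= K by rewrite /K ler1n.
have NK : 2 * K + 1 <= N.
  have h : (k.*2).+1%:R <= N by rewrite /N ler_nat.
  by move: h; rewrite -natr1 -muln2 natrM /K; lra.
have [ba tge] := @key_ineq R N K a b t c F K1 NK hab habF Fpos t0 tN c0 cE HcF.
have rlt : forall j, j != j1 -> r j < r j1.
  move=> j jn; have := j2max j jn; rewrite /= in ba; move: ba; rewrite /a /b; lra.
have rdist : forall j, j != j1 -> r j != r j1.
  by move=> j jn; rewrite lt_eqF // rlt.
have rootE : forall mu, root (char_poly A) mu -> exists j, mu = r j.
  move=> mu; rewrite -(fmorph_root (toC R)) cpE /root horner_prod => /prodf_eq0 [j _].
  rewrite hornerXsubC subr_eq0 => /eqP /complexI ->.
  by exists j.
have root1 : root (char_poly A) (r j1).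
  rewrite -(fmorph_root (toC R)) cpE /root horner_prod.
  by apply/prodf_eq0; exists j1 => //; rewrite hornerXsubC subrr.
have eig1 : eigenvalue A (r j1) by rewrite eigenvalue_root_char.
exists (r j1); split => //.
- move=> mu; rewrite eigenvalue_root_char => /rootE [j ->]; exact: j1max.
- rewrite /simple_eigenvalue -(@mup_map _ _ (toC R)) ?monic_neq0 ?char_poly_monic //.
  rewrite cpE (bigD1 j1) //= mulrC mupMr.
    by have := mup_XsubCX 1 (toC R (r j1)) (toC R (r j1)); rewrite eqxx expr1.
  rewrite /root horner_prod; apply/negP => /prodf_eq0 [j jn].
  by rewrite hornerXsubC subr_eq0 => /eqP /complexI /esym /eqP; rewrite (negPf (rdist j jn)).
- have [v vE v0] := eigenvalueP eig1.
  have hv := ev j1 rdist v vE.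
  have hv2 : (N - K) * \sum_i v 0 i ^+ 2 <= (\sum_i v 0 i) ^+ 2.
    rewrite hv; apply: ler_wpM2r => //; apply: sumr_ge0 => ? _; apply: sqr_ge0.
  have [x [xE x0 xs xq]] : exists x : 'rV[R]_n, [/\ x *m A = r j1 *: x, x != 0,
      0 <= \sum_i x 0 i & (N - K) * \sum_i x 0 i ^+ 2 <= (\sum_i x 0 i) ^+ 2].
    case: (lerP 0 (\sum_i v 0 i)) => hs; first by exists v.
    exists (- v); split.
    + by rewrite mulNmx vE scalerN.
    + by rewrite oppr_eq0.
    + rewrite (eq_bigr (fun i => - v 0 i)); last by move=> i _; rewrite mxE.
      by rewrite sumrN oppr_ge0 ltW.
    + rewrite (eq_bigr (fun i => v 0 i ^+ 2)); last by move=> i _; rewrite mxE sqrrN.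
      rewrite [\sum_i (- v) 0 i](eq_bigr (fun i => - v 0 i)); last by move=> i _; rewrite mxE.
      by rewrite sumrN sqrrN.
  exists x^T; split.
  + by apply: contra x0 => /eqP; rewrite -trmx0 => /trmx_inj ->.
  + by rewrite -{1}As -trmx_mul xE linearZ.
  + have -> : [set i : 'I_n | 0 <= x^T i ord0] = [set i | 0 <= x 0 i].
      by apply/setP => i; rewrite !inE mxE.
    apply: (@count_nonneg R n k (fun i => x 0 i)) => //; first by rewrite (leq_trans _ kn) // ltnS -addnn leq_addr.
    by rewrite natrB.
Qed.
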